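(* Let $L$ be a frame and $f\in\overline{\mathrm{F}}(L)$. The following are equivalent: (1) $f$ is real-valued; (2) $\big(\bigvee_{r\in\mathbb{Q}}f(r,\textsf{---})\big)^\ast=0=\big(\bigvee_{s\in\mathbb{Q}}f(\textsf{---},s)\big)^\ast$; (3) $\bigwedge_{s\in\mathbb{Q}}f(\textsf{---},s)=0=\bigwedge_{r\in\mathbb{Q}}f(r,\textsf{---})$.
   Context: $\mathbb{Q}$ is the rationals. A sublocale of $L$ is a subset closed under arbitrary meets and such that $x\to s\in S$ for $x\in L$, $s\in S$; $\mathrm{coS}(L)$ is the frame of all sublocales ordered by reverse inclusion (bottom $0=L$, top $1=\{1\}$); all lattice operations and pseudocomplements $^\ast$ are taken in $\mathrm{coS}(L)$. The frame $\mathfrak{L}(\overline{\mathbb{IR}})$ is presented by generators $(r,\textsf{---})$, $(\textsf{---},s)$ ($r,s\in\mathbb{Q}$) subject to (r1) $(r,\textsf{---})\wedge(\textsf{---},s)=0$ whenever $r\ge s$; (r3) $(r,\textsf{---})=\bigvee_{s>r}(s,\textsf{---})$; (r4) $(\textsf{---},s)=\bigvee_{r<s}(\textsf{---},r)$. $\overline{\mathrm{F}}(L)$ is the set of frame homomorphisms $f\colon\mathfrak{L}(\overline{\mathbb{IR}})\to\mathrm{coS}(L)$ with $f(r,\textsf{---})^\ast\le f(\textsf{---},s)$ and $f(\textsf{---},s)^\ast\le f(r,\textsf{---})$ for all $r<s$, ordered by $f\le g$ iff $f(r,\textsf{---})\le g(r,\textsf{---})$ and $g(\textsf{---},s)\le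 f(\textsf{---},s)$; it is a complete lattice with top $\boldsymbol{+\infty}$ ($\boldsymbol{+\infty}(r,\textsf{---})=1$, $\boldsymbol{+\infty}(\textsf{---},s)=0$) and bottom $\boldsymbol{-\infty}$ ($\boldsymbol{-\infty}(r,\textsf{---})=0$, $\boldsymbol{-\infty}(\textsf{---},s)=1$). An $f\in\overline{\mathrm{F}}(L)$ is real-valued if for every $g\in\overline{\mathrm{F}}(L)$: $f\vee g=\boldsymbol{+\infty}$ implies $g=\boldsymbol{+\infty}$, and $f\wedge g=\boldsymbol{-\infty}$ implies $g=\boldsymbol{-\infty}$ (joins and meets in $\overline{\mathrm{F}}(L)$). *)

(* Defs.v *)
From mathcomp Require Import all_boot all_order all_algebra.
Set Implicit Arguments. Unset Strict Implicit. Unset Printing Implicit Defensive.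
Import Order.TTheory GRing.Theory Num.Theory.
Local Open Scope ring_scope.

Record frame := Frame {
  fcarrier :> Type;
  fle : fcarrier -> fcarrier -> Prop;
  fsup : (fcarrier -> Prop) -> fcarrier;
  fmeet : fcarrier -> fcarrier -> fcarrier;
  fle_refl : forall x, fle x x;
  fle_trans : forall x y z, fle x y -> fle y z -> fle x z;
  fle_anti : forall x y, fle x y -> fle y x -> x = y;
  fsup_ub : forall (P : fcarrier -> Prop) x, P x -> fle x (fsup P);
  fsup_least : forall (P : fcarrier -> Prop) y,
      (forall x, P x -> fle x y) -> fle (fsup P) y;
  fmeet_l : forall x y, fle (fmeet x y) x;
  fmeet_r : forall x y, fle (fmeet x y) y;
  fmeet_glb : forall x y z, fle z x -> fle z y -> fle z (fmeet x y);
  fdistr : forall x (P : fcarrier -> Prop),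
      fmeet x (fsup P) = fsup (fun z => exists y, P y /\ z = fmeet x y)
}.

Section FrameOps.
Variable L : frame.
Definition ftop : L := fsup (fun _ => True).
Definition finf (P : L -> Prop) : L := fsup (fun z => forall y, P y -> fle z y).
Definition fimp (x y : L) : L := fsup (fun z => fle (fmeet z x) y).
End FrameOps.

Definition is_sublocale (L : frame) (S : L -> Prop) : Prop :=
  (forall P : L -> Prop, (forall x, P x -> S x) -> S (finf P)) /\
  (forall x s, S s -> S (fimp x s)).

(** * The frame coS(L): sublocales ordered by REVERSE inclusion.
    Elements are represented by their underlying subsets [L -> Prop]. *)
Section CoS.
Variable L : frame.

Definition coS0 : L -> Prop := fun _ => True.
Definition coS1 : L -> Prop := fun x => x = ftop L.

Definition coS_le (S T : L -> Prop) : Prop := forall x, T x -> S x.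

Definition coS_join (I : Type) (F : I -> L -> Prop) : L -> Prop :=
  fun x => forall i, F i x.

Definition coS_meet (I : Type) (F : I -> L -> Prop) : L -> Prop :=
  fun x => forall Y, is_sublocale Y -> (forall i y, F i y -> Y y) -> Y x.

Definition coS_meet2 (S T : L -> Prop) : L -> Prop :=
  coS_meet (fun b : bool => if b then S else T).

Definition coS_pc (S : L -> Prop) : L -> Prop :=
  fun x => forall T, is_sublocale T -> coS_meet2 S T = coS0 -> T x.
End CoS.

(** A frame homomorphism f : L(IR-bar) -> coS(L) is given (universal property
    of the presentation) by its values on generators:
    [up f r] = f(r,---) and [down f s] = f(---,s), subject to (r1),(r3),(r4). *)
Record gen_assign (L : frame) := GenAssign {
  up : rat -> L -> Prop;
  down : rat -> L -> Prop
}.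

Definition is_frame_hom_gen (L : frame) (f : gen_assign L) : Prop :=
  (forall r, is_sublocale (up f r)) /\
  (forall s, is_sublocale (down f s)) /\
  (forall r s, s <= r -> coS_meet2 (up f r) (down f s) = @coS0 L) /\
  (forall r, up f r = coS_join (fun s : {s : rat | r < s} => up f (sval s))) /\
  (forall s, down f s = coS_join (fun r : {r : rat | r < s} => down f (sval r))).

Definition inFbar (L : frame) (f : gen_assign L) : Prop :=
  is_frame_hom_gen f /\
  (forall r s, r < s ->
     coS_le (coS_pc (up f r)) (down f s) /\ coS_le (coS_pc (down f s)) (up f r)).

Definition Fle (L : frame) (f g : gen_assign L) : Prop :=
  (forall r, coS_le (up f r) (up g r)) /\ (forall s, coS_le (down g s) (down f s)).

Definition Fpinf (L : frame) : gen_assign L := GenAssign (fun _ => @coS1 L) (fun _ => @coS0 L).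
Definition Fminf (L : frame) : gen_assign L := GenAssign (fun _ => @coS0 L) (fun _ => @coS1 L).

Definition is_Fjoin (L : frame) (h f g : gen_assign L) : Prop :=
  Fle f h /\ Fle g h /\ forall k, inFbar k -> Fle f k -> Fle g k -> Fle h k.
Definition is_Fmeet (L : frame) (h f g : gen_assign L) : Prop :=
  Fle h f /\ Fle h g /\ forall k, inFbar k -> Fle k f -> Fle k g -> Fle k h.

Definition real_valued (L : frame) (f : gen_assign L) : Prop :=
  forall g, inFbar g ->
    (is_Fjoin (Fpinf L) f g -> g = Fpinf L) /\
    (is_Fmeet (Fminf L) f g -> g = Fminf L).

(* Main.v *)
Require Import Defs.
From mathcomp Require Import all_boot all_order all_algebra lra.
From Stdlib Require Import FunctionalExtensionality PropExtensionality Classical.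
Set Implicit Arguments. Unset Strict Implicit.
Import Order.TTheory GRing.Theory Num.Theory.
Local Open Scope ring_scope.

Section FrameLemmas.
Variable L : frame.
Implicit Types x y z : L.

Lemma le_top x : fle x (ftop L).
Proof. by apply: fsup_ub. Qed.

Lemma finf_lb (P : L -> Prop) y : P y -> fle (finf P) y.
Proof. move=> Py; apply: fsup_least => z Hz; exact: Hz. Qed.

Lemma finf_glb (P : L -> Prop) z : (forall y, P y -> fle z y) -> fle z (finf P).
Proof. move=> H; exact: (@fsup_ub L (fun z => forall y, P y -> fle z y) z H). Qed.

Lemma meetC x y : fmeet x y = fmeet y x.
Proof. apply: fle_anti; apply: fmeet_glb; (apply: fmeet_r || apply: fmeet_l). Qed.

Lemma imp_adj x y z : fle z (fimp x y) <-> fle (fmeet z x) y.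
Proof.
split.
- move=> H. apply: (fle_trans (y := fmeet x (fimp x y))).
  + apply: fmeet_glb; first exact: fmeet_r.
    exact: fle_trans (fmeet_l _ _) H.
  + rewrite /fimp fdistr. apply: fsup_least => w [v [Hv ->]].
    by rewrite meetC.
- move=> H; exact: (@fsup_ub L (fun z => fle (fmeet z x) y) z H).
Qed.

Lemma finf_empty : finf (fun _ : L => False) = ftop L.
Proof. apply: fle_anti; first exact: le_top. by apply: finf_glb. Qed.

Lemma subl_top (S : L -> Prop) : is_sublocale S -> S (ftop L).
Proof. move=> [H _]; rewrite -finf_empty; by apply: H. Qed.

Lemma meet_finf x y : fmeet x y = finf (fun w => w = x \/ w = y).
Proof.
apply: fle_anti.
- apply: finf_glb => w [->|->]; [exact: fmeet_l | exact: fmeet_r].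
- apply: fmeet_glb; apply: finf_lb; by [left|right].
Qed.

Lemma subl_meet (S : L -> Prop) x y : is_sublocale S -> S x -> S y -> S (fmeet x y).
Proof. move=> [H _] Sx Sy; rewrite meet_finf; apply: H => w [->|->] //. Qed.

Lemma meet_top x : fmeet x (ftop L) = x.
Proof. apply: fle_anti; first exact: fmeet_l. apply: fmeet_glb; [exact: fle_refl| exact: le_top]. Qed.

Lemma imp_meet x a b : fimp x (fmeet a b) = fmeet (fimp x a) (fimp x b).
Proof.
apply: fle_anti.
- apply: fmeet_glb; apply/imp_adj.
  + apply: (fle_trans (y := fmeet a b)); last exact: fmeet_l.
    by apply/imp_adj; apply: fle_refl.
  + apply: (fle_trans (y := fmeet a b)); last exact: fmeet_r.
    by apply/imp_adj; apply: fle_refl.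
- apply/imp_adj; apply: fmeet_glb.
  + apply: (fle_trans (y := fmeet (fimp x a) x)); last by apply/imp_adj; exact: fle_refl.
    apply: fmeet_glb; [exact: fle_trans (fmeet_l _ _) (fmeet_l _ _) | exact: fmeet_r].
  + apply: (fle_trans (y := fmeet (fimp x b) x)); last by apply/imp_adj; exact: fle_refl.
    apply: fmeet_glb; [exact: fle_trans (fmeet_l _ _) (fmeet_r _ _) | exact: fmeet_r].
Qed.

(* the binary join of sublocales *)
Definition pairset (S T : L -> Prop) : L -> Prop :=
  fun z => exists a b, S a /\ T b /\ z = fmeet a b.

Lemma pairset_subl S T : is_sublocale S -> is_sublocale T -> is_sublocale (pairset S T).
Proof.
move=> HS HT; split.
- move=> P HP.
  pose A := finf (fun a => S a /\ exists z b, P z /\ T b /\ z = fmeet a b).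
  pose B := finf (fun b => T b /\ exists z a, P z /\ S a /\ z = fmeet a b).
  exists A, B; split; first by case: HS => H _; apply: H => a [].
  split; first by case: HT => H _; apply: H => b [].
  apply: fle_anti.
  + apply: fmeet_glb; apply: finf_glb.
    * move=> a [Sa [z [b [Pz [Tb ez]]]]]; apply: fle_trans (finf_lb Pz) _.
      rewrite ez; exact: fmeet_l.
    * move=> b [Tb [z [a [Pz [Sa ez]]]]]; apply: fle_trans (finf_lb Pz) _.
      rewrite ez; exact: fmeet_r.
  + apply: finf_glb => z Pz. have [a [b [Sa [Tb ez]]]] := HP z Pz.
    rewrite ez; apply: fmeet_glb.
    * apply: (fle_trans (y:=A)); first exact: fmeet_l.
      apply: finf_lb; split=> //; by exists z, b.
    * apply: (fle_trans (y:=B)); first exact: fmeet_r.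
      apply: finf_lb; split=> //; by exists z, a.
- move=> x z [a [b [Sa [Tb ->]]]]; exists (fimp x a), (fimp x b).
  split; first by case: HS => _ H; apply: H.
  split; first by case: HT => _ H; apply: H.
  exact: imp_meet.
Qed.

End FrameLemmas.
Section CoSLemmas.
Variable L : frame.
Implicit Types x y z : L.
Implicit Types S T X Y : L -> Prop.

Lemma predeqP S T : (forall x, S x <-> T x) -> S = T.
Proof. move=> H; apply: functional_extensionality => x; apply: propositional_extensionality; exact: H. Qed.

Lemma eq0P S : S = @coS0 L <-> forall x, S x.
Proof. split; first by move=> ->. by move=> H; apply: predeqP. Qed.

Lemma meet2_in S T x : S x \/ T x -> coS_meet2 S T x.
Proof. move=> H Y _ HY; case: H => H; [exact: (HY true) | exact: (HY false)]. Qed.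

Lemma meet2_pairset S T x : is_sublocale S -> is_sublocale T ->
  coS_meet2 S T x -> pairset S T x.
Proof.
move=> HS HT H; apply: H; first exact: pairset_subl.
case=> y /= Hy.
- exists y, (ftop L); split=> //; split; [exact: subl_top | by rewrite meet_top].
- exists (ftop L), y; split; first exact: subl_top. split=> //; by rewrite meetC meet_top.
Qed.

Lemma pairset_meet2 S T x : pairset S T x -> coS_meet2 S T x.
Proof.
move=> [a [b [Sa [Tb ->]]]] Y HY HST; apply: subl_meet => //; [exact: (HST true) | exact: (HST false)].
Qed.

Lemma meet2_mono S T S' T' x : (forall y, S y -> S' y) -> (forall y, T y -> T' y) ->
  coS_meet2 S T x -> coS_meet2 S' T' x.
Proof.
move=> hS hT H Y HY HST; apply: H => //; case=> y /= Hy; [exact: (HST true) (hS _ Hy) | exact: (HST false) _ (hT _ Hy)].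
Qed.

Lemma meet2C S T x : coS_meet2 S T x -> coS_meet2 T S x.
Proof.
move=> H Y HY HST; apply: H => //; case=> y /= Hy; [exact: (HST false) | exact: (HST true)].
Qed.

Lemma subl_inter (I : Type) (F : I -> L -> Prop) :
  (forall i, is_sublocale (F i)) -> is_sublocale (fun x => forall i, F i x).
Proof.
move=> H; split.
- move=> P HP i; case: (H i) => Hi _; apply: Hi => x Px; exact: HP.
- move=> x s Hs i; case: (H i) => _ Hi; apply: Hi; exact: Hs.
Qed.

Lemma subl_pc S : is_sublocale (coS_pc S).
Proof.
split.
- move=> P HP T HT E; case: (HT) => H _; apply: H => x Px; exact: (HP x Px T _ E).
- move=> x s Hs T HT E; case: (HT) => _ H; apply: H; exact: (Hs T _ E).
Qed.

Lemma subl_cmeet (I : Type) (F : I -> L -> Prop) : is_sublocale (coS_meet F).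
Proof.
split.
- move=> P HP Y HY E; case: (HY) => H _; apply: H => x Px; exact: (HP x Px Y _ E).
- move=> x s Hs Y HY E; case: (HY) => _ H; apply: H; exact: (Hs Y _ E).
Qed.

Lemma cmeet_lb (I : Type) (F : I -> L -> Prop) i x : F i x -> coS_meet F x.
Proof. move=> H Y _ HY; exact: HY H. Qed.

Lemma cmeet_glb (I : Type) (F : I -> L -> Prop) Y : is_sublocale Y ->
  (forall i x, F i x -> Y x) -> forall x, coS_meet F x -> Y x.
Proof. move=> HY H x Hx; exact: Hx. Qed.

Lemma subl_1 : is_sublocale (@coS1 L).
Proof.
split.
- move=> P HP; apply: fle_anti; first exact: le_top.
  apply: finf_glb => y Py; rewrite (HP _ Py); exact: fle_refl.
- move=> x s ->; apply: fle_anti; first exact: le_top.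
  apply/imp_adj; exact: le_top.
Qed.

Lemma pc_intro S T : is_sublocale T -> (forall x, coS_meet2 S T x) ->
  forall x, coS_pc S x -> T x.
Proof. move=> HT H x Hx; apply: Hx => //; exact/eq0P. Qed.

Lemma P2 S : is_sublocale S -> forall x, coS_meet2 S (coS_pc S) x.
Proof.
move=> HS x.
pose s := finf (fun y => S y /\ fle x y).
have Ss : S s by case: HS => H _; apply: H => y [].
have xs : fle x s by apply: finf_glb => y [].
have Hxe : x = fmeet s (fimp s x).
  apply: fle_anti.
  - apply: fmeet_glb => //; apply/imp_adj; exact: fmeet_l.
  - by rewrite meetC; apply/imp_adj; exact: fle_refl.
rewrite Hxe; apply: pairset_meet2; exists s, (fimp s x); split=> //; split=> //.
move=> T HT E.
have := meet2_pairset HS HT (proj1 (eq0P _) E x) => -[a [b [Sa [Tb ex]]]].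
have sa : fle s a by apply: finf_lb; split=> //; rewrite ex; exact: fmeet_l.
have -> : fimp s x = fimp s b.
  apply: fle_anti.
  - apply/imp_adj; apply: (fle_trans (y := x)); last by rewrite ex; exact: fmeet_r.
    by apply/imp_adj; exact: fle_refl.
  - apply/imp_adj; rewrite ex; apply: fmeet_glb.
    + apply: (fle_trans (y := s)) => //; exact: fmeet_r.
    + by apply/imp_adj; exact: fle_refl.
by case: HT => _ H; apply: H.
Qed.

Lemma pc_anti X Y : is_sublocale Y -> (forall z, Y z -> X z) ->
  forall z, coS_pc X z -> coS_pc Y z.
Proof.
move=> HY H; apply: pc_intro; first exact: subl_pc.
move=> x; apply: meet2_mono (P2 HY x) => //.
Qed.

Lemma pc_pc S : is_sublocale S -> forall z, coS_pc (coS_pc S) z -> S z.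
Proof.
move=> HS; apply: pc_intro => // x; apply: meet2C; exact: P2.
Qed.

Lemma pc3 S : is_sublocale S -> forall z, coS_pc S z -> coS_pc (coS_pc (coS_pc S)) z.
Proof.
move=> HS; apply: pc_anti; first by do 2 apply: subl_pc.
exact: pc_pc.
Qed.

Lemma pc0 z : coS_pc (@coS0 L) z -> z = ftop L.
Proof.
move=> H; apply: (pc_intro subl_1 _ H) => x; apply: meet2_in; by left.
Qed.

Lemma zero_of_meet2 S T : is_sublocale S -> (forall x, T x -> S x) ->
  (forall x, coS_meet2 S T x) -> forall x, S x.
Proof. move=> HS H E x; apply: E => //; case=> //=. Qed.

End CoSLemmas.
Section Fbar.
Variable L : frame.
Implicit Types f g k : gen_assign L.

Lemma subl_and (S T : L -> Prop) : is_sublocale S -> is_sublocale T ->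
  is_sublocale (fun x => S x /\ T x).
Proof.
move=> [S1 S2] [T1 T2]; split.
- move=> P HP; split.
  + apply: S1 => w Pw; exact: (proj1 (HP w Pw)).
  + apply: T1 => w Pw; exact: (proj2 (HP w Pw)).
- move=> w s [Ss Ts]; split; [exact: S2 | exact: T2].
Qed.

Lemma subl_inter2 (I : Type) (P : I -> Prop) (F : I -> L -> Prop) :
  (forall i, P i -> is_sublocale (F i)) -> is_sublocale (fun x => forall i, P i -> F i x).
Proof.
move=> H; split.
- move=> Q HQ i Pi; case: (H i Pi) => Hi _; apply: Hi => x Qx; exact: HQ.
- move=> x s Hs i Pi; case: (H i Pi) => _ Hi; apply: Hi; exact: Hs.
Qed.

Section Props.
Variable f : gen_assign L.
Hypothesis hf : inFbar f.

Lemma Fsubl_up r : is_sublocale (up f r).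
Proof. by case: hf => [[H _] _]. Qed.
Lemma Fsubl_down s : is_sublocale (down f s).
Proof. by case: hf => [[_ [H _]] _]. Qed.
Lemma Fr1 r s : s <= r -> forall x, coS_meet2 (up f r) (down f s) x.
Proof. case: hf => [[_ [_ [H _]]] _] sr; apply/eq0P; exact: H. Qed.
Lemma Fr3 r x : up f r x <-> (forall s, r < s -> up f s x).
Proof.
case: hf => [[_ [_ [_ [H _]]]] _]; rewrite (H r) /coS_join; split.
- move=> Hx s rs; exact: (Hx (exist _ s rs)).
- move=> Hx [s rs]; exact: Hx.
Qed.
Lemma Fr4 s x : down f s x <-> (forall r, r < s -> down f r x).
Proof.
case: hf => [[_ [_ [_ [_ H]]]] _]; rewrite (H s) /coS_join; split.
- move=> Hx r rs; exact: (Hx (exist _ r rs)).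
- move=> Hx [r rs]; exact: Hx.
Qed.
Lemma Fup_mono r t x : r <= t -> up f r x -> up f t x.
Proof.
rewrite le_eqVlt => /orP [/eqP -> //| rt] /Fr3; exact.
Qed.
Lemma Fdown_mono r s x : r <= s -> down f s x -> down f r x.
Proof.
rewrite le_eqVlt => /orP [/eqP -> //| rs] /Fr4; exact.
Qed.
Lemma Fc1 r s x : r < s -> down f s x -> coS_pc (up f r) x.
Proof. case: hf => _ H rs; exact: (proj1 (H r s rs)). Qed.
Lemma Fc2 r s x : r < s -> up f r x -> coS_pc (down f s) x.
Proof. case: hf => _ H rs; exact: (proj2 (H r s rs)). Qed.
End Props.

End Fbar.
Arguments Fup_mono [L f] hf [r t x].
Arguments Fdown_mono [L f] hf [r s x].
Arguments Fc1 [L f] hf [r s x].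
Arguments Fc2 [L f] hf [r s x].

Section JoinHalf.
Variable L : frame.
Implicit Types f g k : gen_assign L.

Lemma gen_eq f g : (forall r, up f r = up g r) -> (forall s, down f s = down g s) -> f = g.
Proof.
case: f => u d; case: g => u' d' /= Hu Hd.
have -> : u = u' by apply: functional_extensionality.
have -> : d = d' by apply: functional_extensionality.
by [].
Qed.

Lemma join_half_1 f : inFbar f ->
  (forall g, inFbar g -> is_Fjoin (Fpinf L) f g -> g = Fpinf L) ->
  forall x, coS_meet (fun r => up f r) x.
Proof.
move=> hf RV.
set c := coS_meet (fun r => up f r).
have Sc : is_sublocale c by exact: subl_cmeet.
pose g := GenAssign (fun _ : rat => coS_pc c) (fun _ : rat => coS_pc (coS_pc c)).
have hg : inFbar g.
  split; first (split; [|split; [|split; [|split]]]).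
  - move=> r; exact: subl_pc.
  - move=> s; exact: subl_pc.
  - move=> r s _; apply/eq0P; apply: P2; exact: subl_pc.
  - move=> r; apply: predeqP => x; rewrite /coS_join /=; split.
    + by move=> H _.
    + move=> H; have h : r < r + 1 by lra. exact: (H (exist _ (r+1) h)).
  - move=> r; apply: predeqP => x; rewrite /coS_join /=; split.
    + by move=> H _.
    + move=> H; have h : r - 1 < r by lra. exact: (H (exist _ (r-1) h)).
  - move=> r s _ /=; split; first by move=> x.
    exact: pc3.
have Hj : is_Fjoin (Fpinf L) f g.
  split; last split.
  - split=> [r x /= ->|s x //]; exact: subl_top (Fsubl_up hf r).
  - split=> [r x /= ->|s x //]; exact: subl_top (subl_pc c).
  - move=> k hk [_ Hfk] [_ Hgk].
    have Kall : forall s x, down k s x.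
      move=> s; apply: (zero_of_meet2 (T := down k s)) => //; first exact: (Fsubl_down hk s).
      move=> x; apply: (meet2_mono (S := coS_pc c) (T := coS_pc (coS_pc c))); last first.
        apply: P2; exact: subl_pc.
      + move=> y Hy; exact: Hgk.
      + move=> y Hy; apply: Hfk.
        apply: (pc_intro (S := up f s)); first exact: (Fsubl_down hf s).
          by apply: Fr1.
        apply: (pc_anti (X := c)) => //; first exact: (Fsubl_up hf s).
        move=> z Hz; exact: cmeet_lb Hz.
    split=> [r x /= Hx|s x _]; last exact: Kall.
    apply: pc0; have -> : @coS0 L = down k (r + 1) by symmetry; apply/eq0P; exact: Kall.
    apply: (Fc2 hk) Hx; lra.
have := RV g hg Hj => /(f_equal (fun h => up h 0)) /= Hc.
apply: (zero_of_meet2 (T := coS_pc c)) => //.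
- move=> x; rewrite Hc => ->; exact: subl_top.
- exact: P2.
Qed.

End JoinHalf.
Section JoinHalf2.
Variable L : frame.
Implicit Types f g k : gen_assign L.

Lemma join_half_2 f : inFbar f ->
  (forall x, coS_meet (fun r => up f r) x) ->
  forall g, inFbar g -> is_Fjoin (Fpinf L) f g -> g = Fpinf L.
Proof.
move=> hf Hc g hg [_ [_ Hj]].
pose Z (r : rat) := fun x : L => up f r x /\ up g r x.
have SZ : forall r, is_sublocale (Z r).
  move=> r; apply: subl_and; [exact: (Fsubl_up hf r) | exact: (Fsubl_up hg r)].
pose E (r : rat) := coS_pc (Z r).
have SE : forall r, is_sublocale (E r) by move=> r; exact: subl_pc.
pose K (s : rat) := fun x : L => forall r : rat, r < s -> E r x.
have SK : forall s, is_sublocale (K s).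
  move=> s; apply: subl_inter2 => r _; exact: SE.
pose U (r : rat) := fun x : L => forall s : rat, r < s -> coS_pc (K s) x.
have SU : forall r, is_sublocale (U r).
  move=> r; apply: subl_inter2 => s _; exact: subl_pc.
have EE : forall (r t : rat) x, r <= t -> E t x -> E r x.
  move=> r t x rt; apply: pc_anti; first exact: SZ.
  move=> z [h1 h2]; split; [exact: (Fup_mono hf rt h1) | exact: (Fup_mono hg rt h2)].
pose k := GenAssign U K.
have hk : inFbar k.
  split; first (split; [|split; [|split; [|split]]]).
  - exact: SU.
  - exact: SK.
  - move=> r s sr; apply/eq0P => x /=.
    apply: (meet2_mono (S := coS_pc (K s)) (T := K s)).
    + move=> y Hy s' rs'; apply: (pc_anti (X := K s)) Hy; first exact: SK.
      move=> z Hz r' r's; apply: Hz; lra.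
    + by [].
    + apply: meet2C; apply: P2; exact: SK.
  - move=> r; apply: predeqP => x; rewrite /coS_join /=; split.
    + move=> H [s rs] s' ss'; apply: H; exact: lt_trans rs ss'.
    + move=> H s rs; have h1 : r < (r + s) / 2 by lra.
      have h2 : (r + s) / 2 < s by lra.
      exact: (H (exist _ ((r + s) / 2) h1) s h2).
  - move=> s; apply: predeqP => x; rewrite /coS_join /=; split.
    + move=> H [r rs] r' r'r; apply: H; exact: lt_trans r'r rs.
    + move=> H r rs; have h1 : r < (r + s) / 2 by lra.
      have h2 : (r + s) / 2 < s by lra.
      exact: (H (exist _ ((r + s) / 2) h2) r h1).
  - move=> r s rs; split=> /=.
    + move=> x Kx.
      have h1 : r < (r + s) / 2 by lra.
      have h2 : (r + s) / 2 < s by lra.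
      set t := (r + s) / 2 in h1 h2.
      have Et : E t x by exact: Kx.
      have EK : forall z, E t z -> K t z.
        move=> z Hz r' r't; apply: EE Hz; exact: ltW.
      have : coS_pc (coS_pc (K t)) x.
        apply: (pc_anti (X := coS_pc (E t))); first exact: subl_pc.
          apply: pc_anti; [exact: SE | exact: EK].
        exact: pc3 (SZ t) _ Et.
      apply: pc_anti; first exact: SU.
      move=> z Hz; exact: Hz.
    + move=> x Ux; exact: Ux.
have Hup : forall h, inFbar h -> (forall r z, Z r z -> up h r z) -> Fle h k.
  move=> h hh HZ; split=> [r x /= Ux|s x /= Dx].
  - apply/(Fr3 hh) => t rt.
    apply: (pc_pc (Fsubl_up hh t)).
    apply: (pc_anti (X := K t)) (Ux t rt); first exact: subl_pc.
    move=> z Hz r' r't.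
    apply: (pc_intro (S := up h t)) Hz; first exact: SE.
    move=> y; apply: (meet2_mono (S := Z r') (T := E r')).
    + move=> v /HZ Hv; exact: (Fup_mono hh (ltW r't) Hv).
    + by [].
    + exact: P2 (SZ _) y.
  - move=> r rs; apply: (pc_anti (X := up h r)); first exact: SZ.
      by move=> z /HZ.
    exact: (Fc1 hh) rs Dx.
have Hfk : Fle f k by apply: Hup => // r z [].
have Hgk : Fle g k by apply: Hup => // r z [].
have [_ Kall] := Hj k hk Hfk Hgk.
have Eall : forall r x, E r x.
  move=> r x; have h : r < r + 1 by lra. exact: (Kall (r + 1) x I r h).
have Gpc : forall r x, coS_pc (up g r) x.
  move=> r.
  have key : forall r' t x, r <= r' -> t < r' -> up f t x -> coS_pc (up g r) x.
    move=> r' t x rr' tr' Ht.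
    have B1 := Fc2 hf tr' Ht.
    have AB : forall z, coS_pc (down f r') z -> up f r' z.
      apply: pc_intro; first exact: (Fsubl_up hf r').
      move=> y; apply: meet2C; apply: (Fr1 hf); exact: lexx.
    have A1 : forall z, coS_pc (up f r') z -> coS_pc (coS_pc (down f r')) z.
      apply: pc_anti; [exact: subl_pc | exact: AB].
    have B3 : coS_pc (coS_pc (up f r')) x.
      apply: (pc_anti (X := coS_pc (coS_pc (down f r')))); first exact: subl_pc.
        exact: A1.
      exact: pc3 (Fsubl_down hf r') _ B1.
    set w := coS_meet2 (coS_pc (up f r')) (coS_pc (up g r')).
    have Sw : is_sublocale w by exact: subl_cmeet.
    have wall : forall y, w y.
      move=> y; apply: (pc_intro (S := Z r')) => //; last exact: Eall.
      move=> y'.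
      have HM : coS_meet2 (coS_pc w) w y' by apply: meet2C; apply: P2.
      apply: (meet2_mono _ _ HM); last by [].
      + move=> z Hz; split.
        * apply: (pc_intro (S := w)) Hz; first exact: (Fsubl_up hf r').
          move=> v; apply: (meet2_mono (S := coS_pc (up f r')) (T := up f r')).
          -- move=> u Hu; apply: meet2_in; by left.
          -- by [].
          -- apply: meet2C; apply: P2; exact: (Fsubl_up hf r').
        * apply: (pc_intro (S := w)) Hz; first exact: (Fsubl_up hg r').
          move=> v; apply: (meet2_mono (S := coS_pc (up g r')) (T := up g r')).
          -- move=> u Hu; apply: meet2_in; by right.
          -- by [].
          -- apply: meet2C; apply: P2; exact: (Fsubl_up hg r').
    have G1 : coS_pc (up g r') x.
      apply: (pc_intro (S := coS_pc (up f r'))) B3; first exact: subl_pc.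
      exact: wall.
    apply: (pc_anti (X := up g r')) G1; first exact: (Fsubl_up hg r).
    move=> z Hz; exact: (Fup_mono hg rr' Hz).
  move=> x; apply: (@cmeet_glb L rat (fun r0 => up f r0) (coS_pc (up g r)) (subl_pc _) _ x (Hc x)).
  move=> t y Ht; have [tr|rt] := ltP t r.
  + exact: (key r t y (lexx r) tr Ht).
  + apply: (key (t + 1) t y _ _ Ht); lra.
have Hall : forall s x, down g s x.
  move=> s x; apply: (pc_intro (S := up g s)); first exact: (Fsubl_down hg s).
    apply: (Fr1 hg); exact: lexx.
  exact: Gpc.
apply: gen_eq => [r|s] /=; apply: predeqP => x; split.
- move=> Hx; apply: pc0; have -> : @coS0 L = down g (r + 1).
    by symmetry; apply/eq0P; exact: Hall.
  apply: (Fc2 hg) Hx; lra.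
- move=> ->; exact: subl_top (Fsubl_up hg r).
- by [].
- by move=> _; exact: Hall.
Qed.

End JoinHalf2.
Section Neg.
Variable L : frame.
Implicit Types f g h k : gen_assign L.

Definition negF f : gen_assign L := GenAssign (fun r => down f (- r)) (fun s => up f (- s)).

Lemma negK f : negF (negF f) = f.
Proof. apply: gen_eq => r /=; by rewrite opprK. Qed.

Lemma neg_inFbar f : inFbar f -> inFbar (negF f).
Proof.
move=> hf; split; first (split; [|split; [|split; [|split]]]) => /=.
- move=> r; exact: (Fsubl_down hf (- r)).
- move=> s; exact: (Fsubl_up hf (- s)).
- move=> r s sr; apply/eq0P => x; apply: meet2C; apply: (Fr1 hf); by rewrite lerN2.
- move=> r; apply: predeqP => x; rewrite /coS_join (Fr4 hf); split.
  + move=> H [s rs] /=; apply: H; by rewrite ltrN2.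
  + move=> H t tr; rewrite -(opprK t); have h : r < - t by rewrite ltrNr.
    exact: (H (exist _ (- t) h)).
- move=> s; apply: predeqP => x; rewrite /coS_join (Fr3 hf); split.
  + move=> H [r rs] /=; apply: H; by rewrite ltrN2.
  + move=> H t tr; rewrite -(opprK t); have h : - t < s by rewrite ltrNl.
    exact: (H (exist _ (- t) h)).
- move=> r s rs /=; have h : - s < - r by rewrite ltrN2.
  split=> x Hx; [exact: (Fc2 hf h Hx) | exact: (Fc1 hf h Hx)].
Qed.

Lemma neg_inFbarE f : inFbar (negF f) -> inFbar f.
Proof. by move=> /neg_inFbar; rewrite negK. Qed.

Lemma Fle_negE f g : Fle (negF f) (negF g) <-> Fle g f.
Proof.
split.
- move=> [H1 H2]; split=> r x.
  + by have := H2 (- r) x; rewrite /= opprK.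
  + by have := H1 (- r) x; rewrite /= opprK.
- move=> [H1 H2]; split=> r x /=; [exact: H2 | exact: H1].
Qed.

Lemma join_negE h f g : is_Fjoin (negF h) (negF f) (negF g) <-> is_Fmeet h f g.
Proof.
split.
- move=> [H1 [H2 H3]]; split; first exact/Fle_negE.
  split; first exact/Fle_negE.
  move=> k hk Hkf Hkg; apply/Fle_negE; apply: H3; first exact: neg_inFbar.
  + exact/Fle_negE.
  + exact/Fle_negE.
- move=> [H1 [H2 H3]]; split; first exact/Fle_negE.
  split; first exact/Fle_negE.
  move=> k hk Hkf Hkg; rewrite -(negK k); apply/Fle_negE; apply: H3.
  + exact: neg_inFbar.
  + by apply/Fle_negE; rewrite negK.
  + by apply/Fle_negE; rewrite negK.
Qed.

Lemma meet_half f : inFbar f ->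
  ((forall g, inFbar g -> is_Fmeet (Fminf L) f g -> g = Fminf L) <->
   (forall x, coS_meet (fun s => down f s) x)).
Proof.
move=> hf.
have hn := neg_inFbar hf.
have reidx : forall x, coS_meet (fun r => up (negF f) r) x <-> coS_meet (fun s => down f s) x.
  move=> x; split=> H Y HY HF; apply: H => // i y Hy.
  - exact: (HF (- i)).
  - apply: (HF (- i)) => /=; by rewrite opprK.
split.
- move=> RV x; apply/reidx; apply: join_half_1 => // g hg Hj.
  have := RV (negF g) (neg_inFbar hg).
  rewrite -join_negE negK => /(_ Hj) E; by rewrite -(negK g) E.
- move=> Hc g hg Hm.
  have := join_half_2 hn (fun x => proj2 (reidx x) (Hc x)) (neg_inFbar hg).
  move/(_ (proj2 (join_negE _ _ _) Hm)) => E.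
  by rewrite -(negK g) E.
Qed.

End Neg.

Lemma p23 (L : frame) (f : gen_assign L) (hf : inFbar f) :
  (coS_pc (coS_join (fun r : rat => up f r)) = @coS0 L /\
    coS_pc (coS_join (fun s : rat => down f s)) = @coS0 L) <->
     (coS_meet (fun s : rat => down f s) = @coS0 L /\
      coS_meet (fun r : rat => up f r) = @coS0 L).
Proof.
have Sa : is_sublocale (coS_join (fun r : rat => up f r)).
  apply: subl_inter => r; exact: (Fsubl_up hf r).
have Sb : is_sublocale (coS_join (fun s : rat => down f s)).
  apply: subl_inter => r; exact: (Fsubl_down hf r).
set a := coS_join _ in Sa *; set b := coS_join _ in Sb *.
set c := coS_meet (fun r : rat => up f r).
set c' := coS_meet (fun s : rat => down f s).
have Sc : is_sublocale c by exact: subl_cmeet.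
have Sc' : is_sublocale c' by exact: subl_cmeet.
split.
- move=> [/eq0P Ha /eq0P Hb]; split; apply/eq0P.
  + have pcA : forall r x, coS_pc c' x -> up f r x.
      move=> r; apply: pc_intro; first exact: (Fsubl_up hf r).
      move=> x; apply: meet2C.
      apply: (meet2_mono _ _ (Fr1 hf (lexx r) x)) => // y Hy.
      exact: (cmeet_lb (F := fun s : rat => down f s) Hy).
    move=> x; apply: (pc_intro Sc' _ (Ha x)) => y.
    have HM : coS_meet2 (coS_pc c') c' y by apply: meet2C; exact: P2.
    apply: (meet2_mono _ _ HM) => // z Hz r; exact: pcA.
  + have pcB : forall s x, coS_pc c x -> down f s x.
      move=> s; apply: pc_intro; first exact: (Fsubl_down hf s).
      move=> x; apply: (meet2_mono _ _ (Fr1 hf (lexx s) x)) => // y Hy.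
      exact: (cmeet_lb (F := fun r : rat => up f r) Hy).
    move=> x; apply: (pc_intro Sc _ (Hb x)) => y.
    have HM : coS_meet2 (coS_pc c) c y by apply: meet2C; exact: P2.
    apply: (meet2_mono _ _ HM) => // z Hz r; exact: pcB.
- move=> [/eq0P Hc' /eq0P Hc]; split; apply/eq0P => x.
  + apply: (@cmeet_glb L rat (fun s => down f s) (coS_pc a) (subl_pc _) _ x (Hc' x)).
    move=> s y Hy.
    have h : s - 1 < s by lra.
    have := Fc1 hf h Hy.
    apply: pc_anti => // z Hz; exact: Hz.
  + apply: (@cmeet_glb L rat (fun r => up f r) (coS_pc b) (subl_pc _) _ x (Hc x)).
    move=> r y Hy.
    have h : r < r + 1 by lra.
    have := Fc2 hf h Hy.
    apply: pc_anti => // z Hz; exact: Hz.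
Qed.

Theorem corollary5p4 (L : frame) (f : gen_assign L) (hf : inFbar f) :
  (real_valued f <->
     (coS_pc (coS_join (fun r : rat => up f r)) = @coS0 L /\
      coS_pc (coS_join (fun s : rat => down f s)) = @coS0 L)) /\
  ((coS_pc (coS_join (fun r : rat => up f r)) = @coS0 L /\
    coS_pc (coS_join (fun s : rat => down f s)) = @coS0 L) <->
     (coS_meet (fun s : rat => down f s) = @coS0 L /\
      coS_meet (fun r : rat => up f r) = @coS0 L)).
Proof.
have H23 := p23 hf.
split=> //.
rewrite H23.
have HM := meet_half hf.
split.
- move=> RV; split; apply/eq0P.
  + apply: (proj1 HM) => g hg; exact: (proj2 (RV g hg)).
  + apply: join_half_1 => // g hg; exact: (proj1 (RV g hg)).
- move=> [/eq0P Hd /eq0P Hu] g hg; split.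
  + exact: join_half_2.
  + exact: (proj2 HM Hd).
Qed.
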